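(* Let $Z\subseteq\{0,1\}^n$ and let $\bm e_i$ be the $i$-th standard basis vector of $\mathbb R^n$, for some $i\in\{1,\dots,n\}$. Then $$P(\bm e_i)=\{(\bm x,\bm z)\in\mathbb R^n\times\operatorname{conv}(Z):\ |x_i|\le z_i\}.$$
   Context: For $\bm\alpha\in\mathbb R^n$, $P_0(\bm\alpha)=\{(\bm x,\bm z)\in\mathbb R^n\times Z:\ \sum_{j=1}^n|\alpha_jx_j|\le\sqrt{\sum_{j=1}^n\alpha_j^2z_j}\}$ and $P(\bm\alpha)=\operatorname{conv}(P_0(\bm\alpha))$, the convex hull. *)

(* Defs.v *)
From mathcomp Require Import all_boot all_order all_algebra.
From mathcomp Require Import classical_sets.
Set Implicit Arguments. Unset Strict Implicit. Unset Printing Implicit Defensive.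
Import Order.TTheory GRing.Theory Num.Theory.
Local Open Scope ring_scope.
Local Open Scope classical_set_scope.

Definition conv (R : numDomainType) (V : lmodType R) (S : set V) : set V :=
  [set v | exists (m : nat) (l : 'I_m -> R) (p : 'I_m -> V),
      (forall k, 0 <= l k) /\ \sum_(k < m) l k = 1 /\
      (forall k, S (p k)) /\ v = \sum_(k < m) l k *: p k].

Definition P0 (R : rcfType) (n : nat) (Z : set 'rV[R]_n) (alpha : 'rV[R]_n)
  : set ('rV[R]_n * 'rV[R]_n) :=
  [set xz : 'rV[R]_n * 'rV[R]_n | Z xz.2 /\
     \sum_(j < n) `|alpha 0 j * xz.1 0 j|
       <= Num.sqrt (\sum_(j < n) alpha 0 j ^+ 2 * xz.2 0 j)].

Definition P (R : rcfType) (n : nat) (Z : set 'rV[R]_n) (alpha : 'rV[R]_n)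
  : set ('rV[R]_n * 'rV[R]_n) := conv (P0 Z alpha).

Definition e_ {R : rcfType} {n : nat} (i : 'I_n) : 'rV[R]_n :=
  \row_(j < n) (if j == i then 1 else 0).

(* Main.v *)
Require Import Defs.
From mathcomp Require Import all_boot all_order all_algebra.
From mathcomp Require Import classical_sets.
Import Order.TTheory GRing.Theory Num.Theory.
Local Open Scope ring_scope.
Local Open Scope classical_set_scope.

Lemma fst_sum (R : rcfType) n m (F : 'I_m -> 'rV[R]_n * 'rV[R]_n) :
  (\sum_(k < m) F k).1 = \sum_(k < m) (F k).1.
Proof. by apply: (big_morph fst). Qed.

Lemma snd_sum (R : rcfType) n m (F : 'I_m -> 'rV[R]_n * 'rV[R]_n) :
  (\sum_(k < m) F k).2 = \sum_(k < m) (F k).2.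
Proof. by apply: (big_morph snd). Qed.

Lemma P0e (R : rcfType) (n : nat) (Z : set 'rV[R]_n)
  (hZ : forall z, Z z -> forall j : 'I_n, z 0 j = 0 \/ z 0 j = 1)
  (i : 'I_n) xz :
  P0 Z (@e_ R n i) xz <-> Z xz.2 /\ `|xz.1 0 i| <= xz.2 0 i.
Proof.
have E1 : \sum_(j < n) `|e_ i 0 j * xz.1 0 j| = `|xz.1 0 i|.
  rewrite (bigD1 i) //= big1 ?addr0; first by rewrite mxE eqxx mul1r.
  by move=> j /negbTE hj; rewrite mxE hj mul0r normr0.
have E2 : \sum_(j < n) e_ i 0 j ^+ 2 * xz.2 0 j = xz.2 0 i.
  rewrite (bigD1 i) //= big1 ?addr0; first by rewrite mxE eqxx expr1n mul1r.
  by move=> j /negbTE hj; rewrite mxE hj expr0n mul0r.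
rewrite /P0 /= E1 E2; split => -[hz h]; split => //.
  by case: (hZ _ hz i) h => ->; rewrite ?sqrtr0 ?sqrtr1.
by case: (hZ _ hz i) h => ->; rewrite ?sqrtr0 ?sqrtr1.
Qed.

Arguments P0e {R n Z} hZ i xz.

Theorem mainTheorem6 (R : rcfType) (n : nat) (Z : set 'rV[R]_n)
  (hZ : forall z, Z z -> forall j : 'I_n, z 0 j = 0 \/ z 0 j = 1)
  (i : 'I_n) :
  P Z (@e_ R n i) = [set xz : 'rV[R]_n * 'rV[R]_n | conv Z xz.2 /\ `|xz.1 0 i| <= xz.2 0 i].
Proof.
rewrite /P; apply/seteqP; split => -[x z] /=.
  case=> m [l [p [l0 [l1 [hp E]]]]].
  have Ex : x = \sum_(k < m) l k *: (p k).1.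
    by have := congr1 fst E; rewrite fst_sum.
  have Ez : z = \sum_(k < m) l k *: (p k).2.
    by have := congr1 snd E; rewrite snd_sum.
  split.
    exists m, l, (fun k => (p k).2); do !split => //.
    by move=> k; case: ((P0e hZ i _).1 (hp k)).
  rewrite Ex Ez !summxE.
  apply: (le_trans (ler_norm_sum _ _ _)); apply: ler_sum => k _.
  rewrite !mxE normrM ger0_norm //; apply: ler_wpM2l => //.
  by case: ((P0e hZ i _).1 (hp k)).
case=> -[m [l [p [l0 [l1 [hp Ez]]]]]] hx.
set s := z 0 i.
have s0 : 0 <= s by apply: le_trans hx.
have Es : s = \sum_(k < m) l k * p k 0 i.
  by rewrite /s Ez summxE; apply: eq_bigr => k _; rewrite mxE.
pose c k := if s == 0 then 1 else p k 0 i / s.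
have pk0 : forall k, 0 <= p k 0 i by move=> k; case: (hZ _ (hp k) i) => ->.
exists m, l, (fun k => (c k *: x, p k)); split; [done|split; [done|split]].
- move=> k; apply/(P0e hZ i _).2 => /=; split; first exact: hp.
  rewrite mxE /c; case: eqP => hs.
    by rewrite mul1r; apply: le_trans hx _; rewrite -/s hs; exact: pk0.
  have sp : 0 < s by rewrite lt_def s0 andbT; apply/eqP.
  rewrite normrM ger0_norm ?divr_ge0 //.
  rewrite mulrAC ler_pdivrMr // mulrC.
  by rewrite mulrC ler_wpM2l.
have sc : \sum_(k < m) l k * c k = 1.
  rewrite /c; case: eqP => hs.
    by under eq_bigr => k _ do rewrite mulr1.
  under eq_bigr => k _ do rewrite mulrA.
  by rewrite -mulr_suml -Es divff //; apply/eqP.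
rewrite [RHS]surjective_pairing fst_sum snd_sum /= -Ez; congr pair.
under eq_bigr => k _ do rewrite scalerA.
by rewrite -scaler_suml sc scale1r.
Qed.
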